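(* There are exactly $q^3-q^2-q-1$ points $P$ (not in $\mathcal P_{2,q}$ and not on $m_T$) for which the projection of $\mathcal P_{2,q}$ from $P$ onto $m_T$ is one of the sets $\mathcal S_\theta$, namely $T$ and the points of $\mathrm{Fig}(T)$ not incident with $m_T$. These projection vertices are distributed as follows. (1) If $q$ is even: (a) there is exactly one projection vertex for $\mathcal P_{2,q}$ onto $\mathcal S_1$, namely $T$; (b) for $\theta\in\mathbb{F}_{q^3}^*$ with $N(\theta)\neq1$, there are exactly $q^2+q+1$ projection vertices for $\mathcal P_{2,q}$ onto $\mathcal S_\theta$, namely the points of $\Pi_\theta$. (2) If $q$ is odd: (a) there are no projection vertices for $\mathcal P_{2,q}$ onto $\mathcal S_{-1}$; (b) there are exactly $q^2+q+2$ projection vertices for $\mathcal P_{2,q}$ onto $\mathcal S_1$, namely $T$ and the points of $\Pi_{-1}$; (c) for $\theta\in\mathbb{F}_{q^3}^*$ with $N(\theta)\neq\pm1$, there are exactly $q^2+q+1$ projection vertices for $\mathcal P_{2,q}$ onto $\mathcal S_\theta$, namely the points of $\Pi_{-\theta}$.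
   Context: Let $q$ be a prime power, $\mathbb{F}_{q^3}^*=\mathbb{F}_{q^3}\setminus\{0\}$, $N(x)=x^{q^2+q+1}$. Points of $\mathrm{PG}(2,q^3)$ have homogeneous coordinates $(x,y,z)$ and lines $[a,b,c]$. Let $\phi$ be the collineation $(x,y,z)\mapsto(z^q,x^q,y^q)$ (on lines $[d,e,f]\mapsto[f^q,d^q,e^q]$), whose fixed points form the subplane $\mathcal P_{2,q}=\{(x,x^q,x^{q^2}):x\in\mathbb{F}_{q^3}^*\}$. A point has Type II (resp. III) if its $\phi$-orbit is three collinear (resp. non-collinear) points; a line has Type III if its $\phi$-orbit is three non-concurrent lines. For a Type III point $X$, the Fig-block is $\mathrm{Fig}(X)=\mathcal E_X\cup\mathcal F_X$, where $\mathcal E_X$ is the set of Type II points on the line $X^\phi X^{\phi^2}$ and $\mathcal F_X=\{\ell^\phi\cap\ell^{\phi^2}:\ell\text{ a Type III line through }X\}$. Let $T=(0,0,1)$ and $m_T$ the line $[0,0,1]$. For $\theta\in\mathbb{F}_{q^3}^*$, $\mathcal S_\theta=\{(x\theta,x^q,0):x\in\mathbb{F}_{q^3}^*\}$ and $\Pi_\theta=\{(r\theta^{q+1},r^q,r^{q^2}\theta):r\in\mathbb{F}_{q^3}^*\}$. For a subplane $\mathcal B$ of order $q$ and a point $P$ not in $\mathcal B$ and not on $m_T$, the projection of $\mathcal B$ from $P$ onto $m_T$ is $\{PQ\cap m_T:Q\in\mathcal B\}$; if it equals $\mathcal S_\theta$, then $P$ is called a projection vertex for $\mathcal B$ onto $\mathcal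 S_\theta$. *)

(* Defs.v *)
(* Projective plane PG(2, F) over a finite field F with |F| = q^3.
   Points and lines of PG(2,F) are represented by their normalized homogeneous
   coordinate vectors: nonzero triples whose first nonzero coordinate is 1. *)
From HB Require Import structures.
From mathcomp Require Import all_boot all_order all_algebra.
Unset Printing Implicit Defensive.
Import GRing.Theory.
Local Open Scope ring_scope.

Section PG2.
Variables (F : finFieldType) (q : nat).

Definition vec := (F * F * F)%type.

Definition pnorm (v : vec) : vec :=
  let: (x, y, z) := v in
  if x != 0 then (1, y / x, z / x)
  else if y != 0 then (0, 1, z / y)
  else if z != 0 then (0, 0, 1)
  else (0, 0, 0).

Definition is_point (v : vec) : bool := (v != (0, 0, 0)) && (pnorm v == v).

Definition pts : {set vec} := [set v | is_point v].

Definition dot (u v : vec) : F :=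
  let: (a1, a2, a3) := u in let: (b1, b2, b3) := v in a1 * b1 + a2 * b2 + a3 * b3.

Definition cross (u v : vec) : vec :=
  let: (a1, a2, a3) := u in let: (b1, b2, b3) := v in
  (a2 * b3 - a3 * b2, a3 * b1 - a1 * b3, a1 * b2 - a2 * b1).

Definition incid (P L : vec) : bool := dot P L == 0.

(* line through two distinct points / intersection point of two distinct lines *)
Definition join (P Q : vec) : vec := pnorm (cross P Q).

Definition coll3 (P Q R : vec) : bool := dot P (cross Q R) == 0.

(* the collineation phi : (x,y,z) |-> (z^q, x^q, y^q);
   on lines [d,e,f] |-> [f^q, d^q, e^q] (same formula) *)
Definition phi (v : vec) : vec :=
  let: (x, y, z) := v in pnorm (z ^+ q, x ^+ q, y ^+ q).

Definition three_orbit (v : vec) : bool :=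
  [&& v != phi v, v != phi (phi v) & phi v != phi (phi v)].

Definition typeII_pt (P : vec) : bool :=
  [&& is_point P, three_orbit P & coll3 P (phi P) (phi (phi P))].

Definition typeIII_pt (P : vec) : bool :=
  [&& is_point P, three_orbit P & ~~ coll3 P (phi P) (phi (phi P))].

Definition typeIII_line (L : vec) : bool :=
  [&& is_point L, three_orbit L & ~~ coll3 L (phi L) (phi (phi L))].

Definition E_set (X : vec) : {set vec} :=
  [set P | typeII_pt P && incid P (join (phi X) (phi (phi X)))].

Definition F_set (X : vec) : {set vec} :=
  [set join (phi l) (phi (phi l)) | l in [set l | typeIII_line l && incid X l]].

Definition Fig (X : vec) : {set vec} := E_set X :|: F_set X.

Definition T : vec := (0, 0, 1).
Definition mT : vec := (0, 0, 1).

Definition normF (x : F) : F := x ^+ (q ^ 2 + q + 1)%N.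

Definition P2q : {set vec} :=
  [set pnorm (x, x ^+ q, x ^+ (q ^ 2)%N) | x : F & x != 0].

Definition S_set (th : F) : {set vec} :=
  [set pnorm (x * th, x ^+ q, 0) | x : F & x != 0].

Definition Pi_set (th : F) : {set vec} :=
  [set pnorm (r * th ^+ q.+1, r ^+ q, r ^+ (q ^ 2)%N * th) | r : F & r != 0].

Definition proj (B : {set vec}) (P : vec) : {set vec} :=
  [set join (join P Q) mT | Q in B].

Definition is_vertex (B : {set vec}) (th : F) (P : vec) : bool :=
  [&& is_point P, P \notin B, ~~ incid P mT & proj B P == S_set th].

Definition vertices (B : {set vec}) (th : F) : {set vec} :=
  [set P | is_vertex B th P].

End PG2.

(* Main.v *)
Require Import Defs.
From HB Require Import structures.
From mathcomp Require Import all_boot all_order all_algebra.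
From mathcomp Require Import cyclic finfield.
From mathcomp Require Import ring zify.
Import GRing.Theory.
Local Open Scope ring_scope.

Section Basics.
Variable F : finFieldType.
Variable q : nat.
Hypothesis q2 : (2 <= q)%N.
Hypothesis frobD : forall x y : F, (x + y) ^+ q = x ^+ q + y ^+ q.
Hypothesis cardF : #|F| = (q ^ 3)%N.

Definition s (x : F) := x ^+ q.

Lemma sD x y : s (x + y) = s x + s y. Proof. exact: frobD. Qed.
Lemma s0 : s 0 = 0. Proof. by rewrite /s expr0n; case: q q2. Qed.
Lemma sN x : s (- x) = - s x.
Proof. by apply/eqP; rewrite -addr_eq0 -sD addNr s0. Qed.
Lemma sB x y : s (x - y) = s x - s y. Proof. by rewrite sD sN. Qed.
Lemma sM x y : s (x * y) = s x * s y. Proof. exact: exprMn. Qed.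
Lemma s1 : s 1 = 1. Proof. exact: expr1n. Qed.
Lemma sV x : s (x^-1) = (s x)^-1. Proof. exact: exprVn. Qed.
Lemma s3 x : s (s (s x)) = x.
Proof.
have e := expf_card x; rewrite cardF in e.
by rewrite /s -!exprM -[RHS]e !expnS expn0 muln1 mulnA.
Qed.
Lemma s_eq0 x : (s x == 0) = (x == 0).
Proof. by rewrite /s expf_eq0; case: q q2. Qed.
Lemma s_inj : injective s.
Proof. by move=> x y /(congr1 (fun z => s (s z))); rewrite !s3. Qed.
Lemma sMn x (n : nat) : s (x ^+ n) = s x ^+ n.
Proof. by rewrite /s -!exprM mulnC. Qed.
Lemma sq2 x : x ^+ (q ^ 2) = s (s x).
Proof. by rewrite /s -exprM mulnn. Qed.

Definition N (x : F) := x * s x * s (s x).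
Lemma NE x : normF F q x = N x.
Proof. rewrite /normF /N !exprD expr1 sq2 -/(s x); ring. Qed.
Lemma NM x y : N (x * y) = N x * N y.
Proof. rewrite /N !sM; ring. Qed.
Lemma Ns x : N (s x) = N x.
Proof. rewrite /N s3; ring. Qed.
Lemma sNorm x : s (N x) = N x.
Proof. rewrite /N !sM s3; ring. Qed.
Lemma N_eq0 x : (N x == 0) = (x == 0).
Proof. by rewrite /N !mulf_eq0 !s_eq0 orbb orbb. Qed.
Lemma NV x : N (x^-1) = (N x)^-1.
Proof. by rewrite /N !sV !invfM. Qed.
Lemma Nm1 : N (-1) = -1.
Proof. rewrite /N !sN !s1; ring. Qed.
Lemma N1 : N 1 = 1.
Proof. rewrite /N !s1; ring. Qed.
Lemma NN x : N (- x) = - N x.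
Proof. by rewrite -mulN1r NM Nm1 mulN1r. Qed.
Lemma NX x : x != 0 -> N (x / s x) = 1.
Proof. by move=> x0; rewrite NM NV Ns divff // N_eq0. Qed.
Lemma M_eq : (q ^ 3).-1 = ((q - 1) * (q ^ 2 + q + 1))%N.
Proof. rewrite !expnS expn0 !muln1. nia. Qed.
Lemma M_gt0 : (0 < (q ^ 3).-1)%N.
Proof. rewrite M_eq muln_gt0; apply/andP; split; lia. Qed.
Lemma unitpow (x : F) : x != 0 -> x ^+ (q ^ 3).-1 = 1.
Proof.
move=> x0; have e := expf_card x; rewrite cardF in e.
have : x ^+ (q ^ 3).-1 * x = 1 * x.
  by rewrite -exprSr prednK ?e ?mul1r // expn_gt0; apply/orP; left; lia.
by move/(mulIf x0).
Qed.
Lemma prim_ex : exists g : F, (q ^ 3).-1.-primitive_root g.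
Proof.
have h := @has_prim_root F (q ^ 3).-1 (enum (predC1 0)) M_gt0.
have /hasP[g _ pg] : has (q ^ 3).-1.-primitive_root (enum (predC1 (0:F))).
  apply: h.
  - apply/allP=> x; rewrite mem_enum /= => x0; rewrite unity_rootE unitpow //.
  - exact: enum_uniq.
  - by rewrite -cardE cardC1 cardF.
by exists g.
Qed.
Notation M := (q ^ 3).-1.
Notation K := (q ^ 2 + q + 1)%N.

Lemma N_pow x : N x = x ^+ K.
Proof. by rewrite -NE. Qed.

Lemma normOne_g g (v : F) : M.-primitive_root g -> N v = 1 ->
  exists2 j, (j < K)%N & v = g ^+ (j * (q - 1)).
Proof.
move=> pg Nv.
have v0 : v != 0 by apply: contra_eq_neq Nv => ->; rewrite /N !mul0r eq_sym oner_eq0.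
have [[i iM] /= vi] := prim_rootP pg (unitpow _ v0).
have : g ^+ (i * K) == g ^+ 0.
  by rewrite expr0 exprM -vi -N_pow Nv.
rewrite (eq_prim_root_expr pg) mod0n -/(dvdn _ _) M_eq dvdn_pmul2r ?addn1 // => /dvdnP[j ij].
exists j; last by rewrite vi ij.
rewrite M_eq ij in iM. rewrite -(ltn_pmul2r (_ : 0 < q - 1)%N); last lia.
by rewrite mulnC; move: iM; rewrite addn1 [X in (_ < X)%N -> _]mulnC [(j * _)%N]mulnC.
Qed.

Lemma H90 (v : F) : N v = 1 -> exists2 w, w != 0 & v = s w / w.
Proof.
have [g pg] := prim_ex.
move=> /(normOne_g _ _ pg)[j _ ->].
have g0 : g != 0 by rewrite (prim_root_eq0 pg) -lt0n M_gt0.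
exists (g ^+ j); first by rewrite expf_eq0 (negPf g0) andbF.
apply/(mulIf (_ : g ^+ j != 0)); first by rewrite expf_eq0 (negPf g0) andbF.
rewrite mulfVK ?expf_eq0 ?(negPf g0) ?andbF // /s -exprM -exprD.
congr (_ ^+ _); rewrite mulnBr muln1 subnK //; apply: leq_pmulr; lia.
Qed.

Lemma H90b (v : F) : N v = 1 -> exists2 w, w != 0 & v = s (s w) / w.
Proof.
move=> /H90[u u0 ->]; exists (s u)^-1; first by rewrite invr_eq0 s_eq0.
by rewrite sV sV s3 invrK mulrC.
Qed.

Lemma card_norm1 : #|[set v : F | N v == 1]| = K.
Proof.
have [g pg] := prim_ex.
have g0 : g != 0 by rewrite (prim_root_eq0 pg) -lt0n M_gt0.
have -> : [set v : F | N v == 1] = [set g ^+ (val j * (q - 1)) | j : 'I_K].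
  apply/setP=> v; rewrite inE; apply/eqP/imsetP.
    by move=> /(normOne_g _ _ pg)[j jK ->]; exists (Ordinal jK).
  move=> [j _ ->]; rewrite N_pow -exprM -mulnA -M_eq mulnC exprM.
  by rewrite (prim_expr_order pg) expr1n.
rewrite card_imset ?card_ord // => i j /eqP.
rewrite (eq_prim_root_expr pg) !modn_small; first by rewrite eqn_pmul2r; [move/eqP; apply: val_inj | lia].
- by rewrite M_eq [X in (_ < X)%N]mulnC ltn_pmul2r ?ltn_ord //; lia.
- by rewrite M_eq [X in (_ < X)%N]mulnC ltn_pmul2r ?ltn_ord //; lia.
Qed.

Definition ex (m : nat) : nat * nat * nat :=
  match m with
  | 0%N => (1, 1, 1) | 1 => (2, 0, 1) | 2 => (0, 1, 2) | 3 => (1, 0, 2)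
  | 4%N => (1, 2, 0) | 5 => (2, 1, 0) | _ => (0, 2, 1) end%N.
Definition e (m : nat) : nat :=
  let: (i, j, k) := ex m in (i + j * q + k * q ^ 2)%N.
Definition d (m : nat) : nat := (e m %% M)%N.

Lemma d_inj (m n : 'I_7) : d m = d n -> m = n.
Proof.
move=> h; apply: val_inj; move: h.
case: m n => m hm [n hn] /=.
have [q2e|q3] := eqVneq q 2%N.
  rewrite /d q2e.
  by case: m hm => [|[|[|[|[|[|[|m]]]]]]] // _; case: n hn => [|[|[|[|[|[|[|n]]]]]]] // _;
    rewrite /e /= q2e.
have q3' : (3 <= q)%N by rewrite ltn_neqAle eq_sym q3 q2.
have sm : forall k, (k < 7)%N -> (e k < M)%N.
  move=> k hk; rewrite M_eq.
  case: k hk => [|[|[|[|[|[|[|k]]]]]]] // _; rewrite /e /=; nia.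
rewrite /d !modn_small ?sm //.
case: m hm => [|[|[|[|[|[|[|m]]]]]]] // _; case: n hn => [|[|[|[|[|[|[|n]]]]]]] // _;
  rewrite /e /=; nia.
Qed.

Lemma poly_id (C : 'I_7 -> F) :
  (forall x, x != 0 -> \sum_(m < 7) C m * x ^+ e m = 0) -> forall m, C m = 0.
Proof.
move=> h m0.
pose p : {poly F} := \sum_(m < 7) C m *: 'X^(d m).
have p0 : p = 0.
  apply: (@roots_geq_poly_eq0 _ _ (enum (predC1 0))).
  - apply/allP=> x; rewrite mem_enum /= => x0.
    rewrite /root horner_sum; apply/eqP; rewrite -[RHS](h x x0).
    apply: eq_bigr => m _; rewrite hornerZ hornerXn /d expr_mod //.
    exact: unitpow.
  - exact: enum_uniq.
  - rewrite -cardE cardC1 cardF /p.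
    apply: (big_ind (fun r : {poly F} => size r <= M)%N) => //.
    + by rewrite size_poly0.
    + by move=> r1 r2 h1 h2; apply: leq_trans (size_add _ _) _; rewrite geq_max h1 h2.
    + move=> m _; apply: leq_trans (size_scale_leq _ _) _.
      by rewrite size_polyXn /d ltn_pmod // M_gt0.
have := congr1 (fun r : {poly F} => r`_(d m0)) p0.
rewrite coef0 /p coef_sum (bigD1 m0) //= coefZ coefXn eqxx mulr1 big1 ?addr0 //.
move=> m mm0; rewrite coefZ coefXn.
case: eqP => [/d_inj hm|]; last by rewrite mulr0.
by move: mm0; rewrite hm eqxx.
Qed.

Lemma e_spec (x : F) m :
  x ^+ e m = let: (i, j, k) := ex m in x ^+ i * (s x) ^+ j * (s (s x)) ^+ k.
Proof.
rewrite /e; case: (ex m) => [[i j] k].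
by rewrite !exprD mulnC exprM -/(s x) [(k * _)%N]mulnC exprM sq2.
Qed.

Lemma key (a b c : F) : c != 0 -> s c = c ->
  (forall x, x != 0 -> N (x - a * s (s x)) = c * N (s x - b * s (s x))) ->
  (a = 0 /\ b = 0 /\ c = 1) \/ (a != 0 /\ b = (s (s a))^-1 /\ c = - N a).
Proof.
move=> c0 sc h.
pose C (m : 'I_7) : F := match val m with
  | 0 => (1 - a * s a * s (s a)) - c * (1 - b * s b * s (s b))
  | 1%N => - s a - c * b * s b
  | 2%N => - a - c * b * s (s b)
  | 3%N => a * s a + c * b
  | 4 => - s (s a) - c * s b * s (s b)
  | 5%N => s a * s (s a) + c * s b
  | _ => a * s (s a) + c * s (s b) end.
have hC : forall m, C m = 0.
  apply: poly_id => x x0.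
  have E := h x x0; rewrite /N !sB !sM !s3 in E.
  rewrite !big_ord_recl big_ord0 !e_spec /C /=.
  have E' : (x - a * s (s x)) * (s x - s a * x) * (s (s x) - s (s a) * s x) -
    c * ((s x - b * s (s x)) * (s (s x) - s b * x) * (x - s (s b) * s x)) = 0.
    by rewrite E subrr.
  apply: etrans E'; ring.
have c3 := hC (@Ordinal 7 3 isT).
have c4 := hC (@Ordinal 7 4 isT).
have c00 := hC (@Ordinal 7 0 isT).
rewrite /C /= in c3 c4 c00.
have [a0|a0] := eqVneq a 0.
  left.
  have b0 : b = 0.
    by apply/eqP; move: c3; rewrite a0 mul0r add0r => /eqP; rewrite mulf_eq0 (negPf c0).
  move: c00; rewrite a0 b0 !mul0r !subr0 mulr1 => /eqP; rewrite subr_eq0 => /eqP c1.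
  by [].
right.
have hb : b = - (a * s a) / c.
  have cb : c * b = - (a * s a) by apply/eqP; rewrite -subr_eq0 opprK addrC c3.
  by rewrite -cb; field.
have sb : s b = - (s a * s (s a)) / c by rewrite hb sM sV sN sM sc.
have ssb : s (s b) = - (s (s a) * a) / c by rewrite sb sM sV sN sM sc s3.
have sa0 : s (s a) != 0 by rewrite !s_eq0.
have E : s (s a) * (c + N a) = - c * (- s (s a) - c * s b * s (s b)).
  by rewrite ssb sb /N; field.
rewrite c4 mulr0 in E.
move/eqP: E; rewrite mulf_eq0 (negPf sa0) /= addr_eq0 => /eqP cN.
split; first done.
split; last done.
rewrite hb cN /N; field.
by rewrite sa0 oppr_eq0 !mulf_neq0 // s_eq0.
Qed.

Ltac fld := field; repeat (apply/andP; split); try done; try (by rewrite ?oppr_eq0 ?N_eq0 ?s_eq0 ?invr_eq0).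

Definition scale (k : F) (v : vec F) : vec F :=
  let: (x, y, z) := v in (k * x, k * y, k * z).

Lemma vecE (a b c a' b' c' : F) : a = a' -> b = b' -> c = c' -> (a, b, c) = (a', b', c').
Proof. by move=> -> -> ->. Qed.

Lemma pnorm_scale k v : k != 0 -> pnorm F (scale k v) = pnorm F v.
Proof.
case: v => [[x y] z] k0 /=.
rewrite !mulf_eq0 (negPf k0) /=.
case: (x =P 0) => [x0|/eqP x0] /=.
  case: (y =P 0) => [y0|/eqP y0] /=; last by apply: vecE => //; fld.
  by case: (z =P 0).
by apply: vecE => //; fld.
Qed.

Lemma pnorm_ex v : exists2 k, k != 0 & pnorm F v = scale k v.
Proof.
case: v => [[x y] z] /=.
case: (x =P 0) => [x0|/eqP x0] /=.
  case: (y =P 0) => [y0|/eqP y0] /=.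
    case: (z =P 0) => [z0|/eqP z0] /=.
      by exists 1; rewrite ?oner_eq0 // x0 y0 z0 !mulr0.
    by exists z^-1; rewrite ?invr_eq0 // x0 y0 mulr0 mulVf.
  exists y^-1; rewrite ?invr_eq0 // x0 mulr0 mulVf //; apply: vecE => //; fld.
exists x^-1; rewrite ?invr_eq0 // mulVf //; apply: vecE => //; fld.
Qed.

Lemma scale_comp k j v : scale k (scale j v) = scale (k * j) v.
Proof. by case: v => [[x y] z] /=; rewrite !mulrA. Qed.
Lemma scale1 v : scale 1 v = v.
Proof. by case: v => [[x y] z] /=; rewrite !mul1r. Qed.

Lemma pnorm_eq u v : pnorm F u = pnorm F v -> exists2 k, k != 0 & u = scale k v.
Proof.
have [k k0 ->] := pnorm_ex u; have [j j0 ->] := pnorm_ex v => e.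
exists (k^-1 * j); first by rewrite mulf_neq0 ?invr_eq0.
by rewrite -scale_comp -e scale_comp mulVf // scale1.
Qed.

Lemma pnorm_idem v : pnorm F (pnorm F v) = pnorm F v.
Proof. by have [k k0 e] := pnorm_ex v; rewrite {1}e pnorm_scale. Qed.

Lemma point_pnorm P : is_point F P -> pnorm F P = P.
Proof. by case/andP=> _ /eqP. Qed.

Lemma pnorm_eq0 v : (pnorm F v == (0, 0, 0)) = (v == (0, 0, 0)).
Proof.
case: v => [[x y] z] /=.
case: (x =P 0) => [->|/eqP x0] /=.
  case: (y =P 0) => [->|/eqP y0] /=.
    case: (z =P 0) => [->|/eqP z0] //=.
    by rewrite !xpair_eqE eqxx oner_eq0 (negPf z0).
  by rewrite !xpair_eqE eqxx oner_eq0 (negPf y0).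
by rewrite !xpair_eqE oner_eq0 (negPf x0).
Qed.

Lemma is_point_pnorm v : v != (0, 0, 0) -> is_point F (pnorm F v).
Proof. by move=> v0; rewrite /is_point pnorm_eq0 v0 pnorm_idem eqxx. Qed.

Lemma cross_scalel k u v : cross F (scale k u) v = scale k (cross F u v).
Proof. case: u v => [[a1 a2] a3] [[b1 b2] b3] /=; apply: vecE; ring. Qed.
Lemma cross_scaler k u v : cross F u (scale k v) = scale k (cross F u v).
Proof. case: u v => [[a1 a2] a3] [[b1 b2] b3] /=; apply: vecE; ring. Qed.

Arguments pnorm : simpl never.
Arguments cross : simpl never.
Arguments scale : simpl never.

Definition Sab (a b : F) : {set vec F} :=
  [set pnorm F (x - a * s (s x), s x - b * s (s x), 0) | x : F & x != 0].

Lemma projE P a b z0 : z0 != 0 -> P = scale z0 (a, b, 1) ->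
  proj F (P2q F q) P = Sab a b.
Proof.
move=> z00 ->; rewrite /proj /P2q -imset_comp; apply: eq_imset => x /=.
rewrite /join.
have [k k0 ->] := pnorm_ex (x, x ^+ q, x ^+ (q ^ 2)).
rewrite cross_scaler pnorm_scale //.
have [j j0 ->] := pnorm_ex (cross F (scale z0 (a, b, 1)) (x, x ^+ q, x ^+ (q ^ 2))).
rewrite cross_scalel pnorm_scale // !cross_scalel pnorm_scale //.
rewrite sq2 -/(s x); congr (pnorm F _).
rewrite /cross /scale; apply: vecE; ring.
Qed.

Lemma mem_imF (f : F -> vec F) v :
  reflect (exists2 x, x != 0 & v = f x) (v \in [set f x | x : F & x != 0]).
Proof.
apply: (iffP imsetP) => [[x]|[x x0 ->]]; last by exists x; rewrite ?inE.
by rewrite inE => x0 ->; exists x.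
Qed.

Lemma suffT th : th != 0 -> N th = 1 -> Sab 0 0 = S_set F q th.
Proof.
move=> th0 /H90[w w0 thw].
have sw0 : s w != 0 by rewrite s_eq0.
apply/setP=> v; apply/mem_imF/mem_imF => -[x x0 ->].
  exists (x * w); first by rewrite mulf_neq0.
  rewrite -(pnorm_scale _ _ sw0); congr (pnorm F _).
  rewrite /scale thw -/(s (x * w)) sM; apply: vecE; fld.
exists (x / w); first by rewrite mulf_neq0 ?invr_eq0.
rewrite -[RHS](pnorm_scale _ _ sw0); congr (pnorm F _).
rewrite /scale thw -/(s x) sM sV; apply: vecE; fld.
Qed.

Lemma L_ker a d : N a != 1 -> d - a * s (s d) = 0 -> d = 0.
Proof.
move=> Na /eqP; rewrite subr_eq0 => /eqP e.
apply/eqP; apply: contraR Na => d0.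
have : N d = N a * N d by rewrite {1}e NM !Ns.
move/eqP; rewrite -{1}[N d]mul1r => /eqP /(mulIf _) ->; last by rewrite N_eq0.
by rewrite eqxx.
Qed.

Lemma L_surj a w : N a != 1 -> exists x, x - a * s (s x) = w.
Proof.
move=> Na.
have inj : injective (fun x => x - a * s (s x)).
  move=> x y e; apply/eqP; rewrite -subr_eq0; apply/eqP; apply: (L_ker _ _ Na).
  by rewrite !sB -[RHS](subrr (y - a * s (s y))) -{1}e; ring.
have [g _ gK] := injF_bij inj.
by exists (g w); rewrite gK.
Qed.

Lemma suffA a th : a != 0 -> N a != 1 -> N a = - N th -> th != 0 ->
  Sab a (s (s a))^-1 = S_set F q th.
Proof.
move=> a0 Na1 Nath th0.
have ssa0 : s (s a) != 0 by rewrite !s_eq0.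
have sec : forall x, s x - (s (s a))^-1 * s (s x) =
    - (s (s a))^-1 * s (s (x - a * s (s x))).
  by move=> x; rewrite !sB !sM !s3; fld.
have Na0 : N a != 0 by rewrite N_eq0.
apply/setP=> v; apply/mem_imF/mem_imF => -[x x0 ->].
  set w0 := x - a * s (s x).
  have w00 : w0 != 0.
    by apply: contra x0 => /eqP h; apply/eqP; apply: (L_ker _ _ Na1).
  have [y y0 hy] : exists2 y, y != 0 &
      - th * (s (s a))^-1 * s (s w0) / w0 = s y / y.
    apply: H90; rewrite !NM NV NN NV !Ns Nath; fld.
  exists y => //.
  have k0 : y * th / w0 != 0 by rewrite !mulf_neq0 ?invr_eq0.
  rewrite sec -(pnorm_scale _ _ k0); congr (pnorm F _).
  rewrite /scale; apply: vecE; try fld.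
  rewrite -/(s y) -/w0.
  have -> : s y = y * (s y / y) by fld.
  rewrite -hy; fld.
have [w0 w00 hw] : exists2 w0, w0 != 0 &
    - (s x / x) / (th * (s (s a))^-1) = s (s w0) / w0.
  apply: H90b; rewrite !(NM, NV, NN, Ns) Nath; fld.
have [z hz] := L_surj _ w0 Na1.
have z0 : z != 0 by apply: contra w00 => /eqP z0; rewrite -hz z0 s0 s0 mulr0 subr0.
exists z => //.
have k0 : x * th / w0 != 0 by rewrite !mulf_neq0 ?invr_eq0.
rewrite sec hz -[RHS](pnorm_scale _ _ k0); congr (pnorm F _).
rewrite /scale; apply: vecE; try fld.
have -> : s (s w0) = w0 * (s (s w0) / w0) by fld.
rewrite -hw -/(s x); fld.
Qed.

Lemma necess a b th : th != 0 -> Sab a b = S_set F q th ->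
  (a = 0 /\ b = 0 /\ N th = 1) \/ (a != 0 /\ b = (s (s a))^-1 /\ N th = - N a).
Proof.
move=> th0 e; apply: key; first by rewrite N_eq0.
  exact: sNorm.
move=> x x0.
have : pnorm F (x - a * s (s x), s x - b * s (s x), 0) \in S_set F q th.
  by rewrite -e; apply/mem_imF; exists x.
case/mem_imF=> y y0 /pnorm_eq[k k0].
rewrite /scale => -[-> -> _].
rewrite -/(s y) !NM Ns; ring.
Qed.

Definition pt (a : F) : vec F := pnorm F (a, (s (s a))^-1, 1).

Lemma pnormx x y z : x != 0 -> pnorm F (x, y, z) = (1, y / x, z / x).
Proof. by move=> x0; rewrite /pnorm x0. Qed.
Lemma pnorm0y y z : y != 0 -> pnorm F (0, y, z) = (0, 1, z / y).
Proof. by move=> y0; rewrite /pnorm eqxx y0. Qed.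
Lemma pnorm00z z : z != 0 -> pnorm F (0, 0, z) = (0, 0, 1).
Proof. by move=> z0; rewrite /pnorm eqxx z0. Qed.

Lemma pt_scale a : a != 0 -> pt a = scale a^-1 (a, (s (s a))^-1, 1).
Proof. by move=> a0; rewrite /pt pnormx // /scale; apply: vecE; fld. Qed.

Lemma pt_P2q a : a != 0 -> (pt a \in P2q F q) = (N a == 1).
Proof.
move=> a0; apply/mem_imF/eqP.
  move=> [x x0 /pnorm_eq[k k0]]; rewrite /scale => -[e1 e2 e3].
  have : N 1 = N (k * x ^+ (q ^ 2)) by rewrite e3.
  by rewrite N1 e1 sq2 !NM !Ns => ->.
move=> /H90[w w0 aw].
have sw0 : s w != 0 by rewrite s_eq0.
exists (s w) => //.
rewrite /pt -(pnorm_scale _ _ w0) sq2 -/(s (s w)) s3; congr (pnorm F _).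
rewrite /scale aw !sM !sV s3; apply: vecE; fld.
Qed.

Lemma T_notin_P2q : T F \notin P2q F q.
Proof.
apply/mem_imF => -[x x0]; rewrite pnormx // /T => -[e].
by move: (oner_neq0 F); rewrite e eqxx.
Qed.

Lemma is_point_T : is_point F (T F).
Proof. by rewrite /is_point /T pnorm00z ?oner_eq0 // !xpair_eqE eqxx oner_eq0 !andbF /=. Qed.

Lemma vertex_iff th P : th != 0 ->
  is_vertex F q (P2q F q) th P <->
  (P = T F /\ N th = 1) \/ (exists a, [/\ a != 0, N a != 1, N th = - N a & P = pt a]).
Proof.
move=> th0; split.
  case/and4P=> pP nP iP /eqP pr.
  case: P pP nP iP pr => [[x0 y0] z0] pP nP iP pr.
  have z00 : z0 != 0 by move: iP; rewrite /incid /mT /dot !mulr0 !add0r mulr1.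
  have Pe : (x0, y0, z0) = scale z0 (x0 / z0, y0 / z0, 1) by rewrite /scale; apply: vecE; fld.
  rewrite (projE _ _ _ _ z00 Pe) in pr.
  case: (necess _ _ _ th0 pr) => [[ha [hb hth]]|[ha [hb hth]]].
    left; split=> //.
    have x00 : x0 = 0 by move: ha => /eqP; rewrite mulf_eq0 invr_eq0 (negPf z00) orbF => /eqP.
    have y00 : y0 = 0 by move: hb => /eqP; rewrite mulf_eq0 invr_eq0 (negPf z00) orbF => /eqP.
    by rewrite -(point_pnorm _ pP) x00 y00 pnorm00z.
  right; exists (x0 / z0); split=> //.
    apply: contra nP => /eqP Na.
    by rewrite -(point_pnorm _ pP) Pe pnorm_scale // hb -/(pt _) pt_P2q // Na.
  by rewrite -(point_pnorm _ pP) Pe pnorm_scale // hb.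
case=> [[-> hth]|[a [a0 Na1 hth ->]]].
  apply/and4P; split.
  - exact: is_point_T.
  - exact: T_notin_P2q.
  - by rewrite /incid /T /mT /dot !mul0r !add0r mulr1 oner_eq0.
  - apply/eqP; rewrite (projE _ 0 0 1 (oner_neq0 _)); last by rewrite /T /scale !mulr0 mulr1.
    exact: suffT.
apply/and4P; split.
- by rewrite /pt is_point_pnorm // !xpair_eqE oner_eq0 !andbF.
- by rewrite pt_P2q.
- by rewrite pt_scale // /incid /mT /scale /dot !mulr0 !add0r !mulr1 invr_eq0.
- apply/eqP; rewrite (projE _ _ _ _ (_ : a^-1 != 0) (pt_scale _ a0)) ?invr_eq0 //.
  by apply: suffA => //; rewrite hth opprK.
Qed.

Lemma phiE x y z : phi F q (x, y, z) = pnorm F (s z, s x, s y).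
Proof. by []. Qed.

Lemma pnorm1 y z : pnorm F (1, y, z) = (1, y, z).
Proof. by rewrite pnormx ?oner_eq0 // !divr1. Qed.
Lemma pnorm01 z : pnorm F (0, 1, z) = (0, 1, z).
Proof. by rewrite pnorm0y ?oner_eq0 // !divr1. Qed.

Lemma phi_T : phi F q (T F) = (1, 0, 0).
Proof. by rewrite /T phiE s0 s1 pnorm1. Qed.
Lemma phi_100 : phi F q (1, 0, 0) = (0, 1, 0).
Proof. by rewrite phiE s0 s1 pnorm01. Qed.
Lemma phi_010 : phi F q (0, 1, 0) = (0, 0, 1).
Proof. by rewrite phiE s0 s1 pnorm00z ?oner_eq0. Qed.

Lemma join_mT : join F (phi F q (T F)) (phi F q (phi F q (T F))) = mT F.
Proof.
rewrite phi_T phi_100 /join.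
have -> : cross F (1, 0, 0) (0, 1, 0) = (0, 0, 1) by rewrite /cross; apply: vecE; ring.
by rewrite pnorm00z ?oner_eq0.
Qed.

Lemma phi_1e0 e : phi F q (1, e, 0) = (0, 1, s e).
Proof. by rewrite phiE s0 s1 pnorm01. Qed.
Lemma phi_01e e : e != 0 -> phi F q (0, 1, s e) = (1, 0, (s (s e))^-1).
Proof.
by move=> e0; rewrite phiE s0 s1 pnormx ?s_eq0 // mul0r mul1r.
Qed.

Lemma join_l e : e != 0 ->
  join F (phi F q (1, e, 0)) (phi F q (phi F q (1, e, 0))) =
  pnorm F ((s (s e))^-1, s e, -1).
Proof.
move=> e0; rewrite phi_1e0 phi_01e // /join; congr (pnorm F _).
by rewrite /cross; apply: vecE; ring.
Qed.

Lemma coll_l e : e != 0 ->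
  coll3 F (1, e, 0) (phi F q (1, e, 0)) (phi F q (phi F q (1, e, 0))) = (N e == -1).
Proof.
move=> e0; rewrite phi_1e0 phi_01e // /coll3 /cross /dot.
have sse : s (s e) != 0 by rewrite !s_eq0.
have -> : 1 * (1 * (s (s e))^-1 - s e * 0) + e * (s e * 1 - 0 * (s (s e))^-1) +
   0 * (0 * 0 - 1 * 1) = (N e + 1) / s (s e) by rewrite /N; fld.
by rewrite mulf_eq0 invr_eq0 (negPf sse) orbF addr_eq0.
Qed.

Lemma three_l e : e != 0 -> three_orbit F q (1, e, 0).
Proof.
move=> e0; rewrite /three_orbit phi_1e0 phi_01e // !xpair_eqE.
by rewrite oner_eq0 (eq_sym 0 1) oner_eq0 (negPf e0) /= andbF.
Qed.

Lemma pt_e a : a != 0 ->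
  pt a = pnorm F ((s (s (- (s a)^-1)))^-1, s (- (s a)^-1), -1).
Proof.
move=> a0; rewrite /pt -[RHS](pnorm_scale _ _ (_ : -1 != 0)) ?oppr_eq0 ?oner_eq0 //.
  congr (pnorm F _); rewrite /scale !sN !sV s3; apply: vecE; fld.
by rewrite oppr_eq0 oner_eq0.
Qed.

Lemma inv_m1 (x : F) : - x^-1 = 1 -> x = -1.
Proof. by move=> h; rewrite -[x]invrK -[x^-1]opprK h invrN invr1. Qed.

Lemma line_cases l : is_point F l -> incid F (T F) l ->
  l = (0, 1, 0) \/ exists e, l = (1, e, 0).
Proof.
case: l => [[l1 l2] l3] /andP[nz /eqP pl].
rewrite /incid /T /dot !mul0r !add0r mul1r => /eqP l30.
move: nz pl; rewrite l30.
have [l10|l10] := eqVneq l1 0.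
  rewrite l10; have [l20|l20] := eqVneq l2 0.
    by rewrite l20 eqxx.
  by move=> _; rewrite pnorm0y // mul0r => <-; left.
by move=> _; rewrite pnormx // mul0r => <-; right; exists (l2 / l1).
Qed.

Lemma NE_a a : a != 0 -> N (- (s a)^-1) = - (N a)^-1.
Proof. by move=> a0; rewrite NN NV Ns. Qed.

Lemma notin_pt a : a != 0 -> ~~ incid F (pt a) (mT F).
Proof.
by move=> a0; rewrite pt_scale // /incid /mT /scale /dot !mulr0 !add0r !mulr1 invr_eq0.
Qed.

Lemma fig_eq : [set P in Fig F q (T F) | ~~ incid F P (mT F)] =
  [set pt a | a : F & (a != 0) && (N a != 1)].
Proof.
apply/setP => P; rewrite inE /Fig in_setU; apply/idP/idP.
  case/andP=> /orP[hE|hF] nI.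
    by move: hE; rewrite inE join_mT (negPf nI) andbF.
  case/imsetP: hF => l; rewrite inE => /andP[tl il] Pl.
  case/and3P: (tl) => pl _ ncl.
  case: (line_cases _ pl il) => [l010|[e le]].
    move: nI; rewrite Pl l010 phi_010 -/(T F) phi_T /join.
    have -> : cross F (0, 0, 1) (1, 0, 0) = (0, 1, 0) by rewrite /cross; apply: vecE; ring.
    by rewrite pnorm01 /incid /mT /dot !mulr0 !add0r mulr1 eqxx.
  have [e0|e0] := eqVneq e 0.
    move: nI; rewrite Pl le e0 phi_1e0 s0 phi_010 /join.
    have -> : cross F (0, 1, 0) (0, 0, 1) = (1, 0, 0) by rewrite /cross; apply: vecE; ring.
    by rewrite pnorm1 /incid /mT /dot !mulr0 mul0r !addr0 eqxx.
  move: ncl; rewrite le coll_l // => NEe.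
  apply/imsetP; exists (- (s (s e))^-1).
    by rewrite inE oppr_eq0 invr_eq0 !s_eq0 e0 /= NN NV !Ns; apply: contra NEe => /eqP h;
      apply/eqP; apply: inv_m1.
  by rewrite Pl le join_l // pt_e ?oppr_eq0 ?invr_eq0 ?s_eq0 // !(sN, sV, s3, invrN, invrK, opprK).
case/imsetP => a; rewrite inE => /andP[a0 Na1] ->.
rewrite notin_pt // andbT; apply/orP; right.
have e0 : - (s a)^-1 != 0 by rewrite oppr_eq0 invr_eq0 s_eq0.
apply/imsetP; exists (1, - (s a)^-1, 0); last by rewrite join_l // pt_e.
rewrite inE; apply/andP; split.
  apply/and3P; split.
  - by rewrite /is_point pnorm1 eqxx !xpair_eqE oner_eq0 /=.
  - exact: three_l.
  - rewrite coll_l // NE_a //; apply: contra Na1 => /eqP h.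
    by move/oppr_inj: h => /eqP; rewrite invr_eq1.
by rewrite /incid /T /dot !mul0r !add0r mulr0.
Qed.

Lemma vert_set th : th != 0 ->
  vertices F q (P2q F q) th = (if N th == 1 then [set T F] else set0) :|:
    [set pt a | a : F & [&& a != 0, N a != 1 & N th == - N a]].
Proof.
move=> th0; apply/setP => P; rewrite inE in_setU; apply/idP/orP.
  move/(vertex_iff _ _ th0) => [[-> h]|[a [a0 Na hth ->]]].
    by left; rewrite h eqxx in_set1.
  by right; apply/imsetP; exists a; rewrite ?inE ?a0 ?Na ?hth ?eqxx.
case=> [|/imsetP[a]].
  case: ifP => [/eqP h /set1P ->|]; last by rewrite in_set0.
  by apply/(vertex_iff _ _ th0); left.
rewrite inE => /and3P[a0 Na /eqP hth] ->.
by apply/(vertex_iff _ _ th0); right; exists a.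
Qed.

Lemma ptE a : a != 0 -> pt a = (1, (s (s a))^-1 / a, 1 / a).
Proof. by move=> a0; rewrite /pt pnormx. Qed.

Lemma card_pt (A : pred F) : (forall a, A a -> a != 0) ->
  #|[set pt a | a : F & A a]| = #|[set a : F | A a]|.
Proof.
move=> hA; apply: card_in_imset => a b; rewrite !inE => /hA a0 /hA b0.
rewrite ptE // ptE // => -[_ /(congr1 GRing.inv)].
by rewrite !div1r !invrK.
Qed.

Lemma T_notin_pt (A : pred F) : (forall a, A a -> a != 0) ->
  T F \notin [set pt a | a : F & A a].
Proof.
move=> hA; apply/imsetP => -[a]; rewrite inE => /hA a0.
rewrite ptE // /T => -[e]; by move: (oner_neq0 F); rewrite e eqxx.
Qed.

Lemma imset_pt_eq (A B : pred F) : (forall a, A a = B a) ->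
  [set pt a | a : F & A a] = [set pt a | a : F & B a].
Proof.
move=> h; apply/setP => v; apply/imsetP/imsetP => -[a]; rewrite inE => ha ->;
  by exists a; rewrite // inE ?h // -h.
Qed.

Lemma card_normc th : th != 0 -> #|[set a : F | N a == N th]| = K.
Proof.
move=> th0.
have -> : [set a : F | N a == N th] = [set v * th | v in [set v : F | N v == 1]].
  apply/setP=> a; rewrite inE; apply/eqP/imsetP.
    move=> h; exists (a / th); last by rewrite divfK.
    by rewrite inE NM NV h divff // N_eq0.
  by move=> [v]; rewrite inE => /eqP h ->; rewrite NM h mul1r.
by rewrite card_imset ?card_norm1 //; apply: mulIf.
Qed.

Lemma Pi_eq th : th != 0 ->
  Pi_set F q th = [set pt a | a : F & (a != 0) && (N a == N th)].
Proof.
move=> th0; apply/setP => v; apply/mem_imF/imsetP.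
  move=> [r r0 ->].
  have k0 : s (s r) * th != 0 by rewrite mulf_neq0 // !s_eq0.
  exists (r * s th / s (s r)).
    by rewrite inE !mulf_neq0 ?invr_eq0 ?s_eq0 //= NM NM NV !Ns mulrAC divff ?mul1r // N_eq0.
  rewrite /pt -[RHS](pnorm_scale _ _ k0) sq2 exprS -/(s th) -/(s r); congr (pnorm F _).
  by rewrite /scale !sM !sV !s3; apply: vecE; fld.
move=> [a]; rewrite inE => /andP[a0 /eqP Na] ->.
have [w w0 hw] : exists2 w, w != 0 & a / s th = s (s w) / w.
  by apply: H90b; rewrite NM NV Ns Na divff // N_eq0.
exists w^-1; first by rewrite invr_eq0.
have ha : a = s th * (s (s w) / w) by rewrite -hw mulrC divfK // s_eq0.
have k0 : s (s (w^-1)) * th != 0 by rewrite mulf_neq0 // !s_eq0 invr_eq0.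
rewrite /pt -(pnorm_scale _ _ k0) sq2 exprS -/(s th) -/(s (w^-1)); congr (pnorm F _).
rewrite /scale ha !sM !sV !s3; apply: vecE; fld.
Qed.

Lemma V_eq : \bigcup_(th : F | th != 0) vertices F q (P2q F q) th =
  T F |: [set pt a | a : F & (a != 0) && (N a != 1)].
Proof.
apply/setP => P; apply/bigcupP/idP.
  move=> [th th0]; rewrite vert_set // in_setU => /orP[].
    case: ifP => _; last by rewrite in_set0.
    by move/set1P => ->; rewrite setU11.
  case/imsetP => a; rewrite inE => /and3P[a0 Na _] ->.
  by apply/setU1P; right; apply/imsetP; exists a; rewrite // inE a0 Na.
case/setU1P => [->|/imsetP[a]].
  exists 1; first by rewrite oner_eq0.
  by rewrite vert_set ?oner_eq0 // N1 eqxx !inE eqxx.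
rewrite inE => /andP[a0 Na] ->.
exists (- a); first by rewrite oppr_eq0.
rewrite vert_set ?oppr_eq0 // in_setU; apply/orP; right.
by apply/imsetP; exists a; rewrite // inE a0 Na NN eqxx.
Qed.

Lemma card_V : #|T F |: [set pt a | a : F & (a != 0) && (N a != 1)]| =
  (q ^ 3 - q ^ 2 - q - 1)%N.
Proof.
have nz : forall a : F, (a != 0) && (N a != 1) -> a != 0 by move=> a /andP[].
rewrite cardsU1 (T_notin_pt (fun a => (a != 0) && (N a != 1)) nz) (card_pt (fun a => (a != 0) && (N a != 1)) nz).
have -> : [set a : F | (a != 0) && (N a != 1)] = [set~ 0] :\: [set a | N a == 1].
  by apply/setP => a; rewrite !inE andbC.
rewrite cardsD cardsC1 cardF.
have -> : [set~ (0 : F)] :&: [set a | N a == 1] = [set a | N a == 1].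
  apply/setIidPr/subsetP => a; rewrite !inE; apply: contraTneq => ->.
  by rewrite /N !mul0r eq_sym oner_eq0.
rewrite card_norm1 M_eq.
have : (2 <= q)%N := q2.
rewrite !expnS expn0 !muln1 /=; nia.
Qed.

Lemma card_ptN th : th != 0 ->
  #|[set pt a | a : F & (a != 0) && (N a == N th)]| = K.
Proof.
move=> th0; rewrite (card_pt (fun a => (a != 0) && (N a == N th))); last by move=> a /andP[].
rewrite -(card_normc _ th0); apply: eq_card => a; rewrite !inE.
case: (a =P 0) => [->|] //=; rewrite /N !mul0r eq_sym.
by apply/esym/negbTE; rewrite N_eq0.
Qed.

Lemma even_m1 : ~~ odd q -> (-1 : F) = 1.
Proof.
move=> ev; have := sN 1; rewrite s1 /s -signr_odd (negPf ev) expr0 => h.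
by rewrite -h.
Qed.

Theorem main_sec (hodd : odd q -> (-1 : F) != 1) :
  let V := \bigcup_(th : F | th != 0) vertices F q (P2q F q) th in
  [/\ #|V| = (q ^ 3 - q ^ 2 - q - 1)%N,
      V = T F |: [set P in Fig F q (T F) | ~~ incid F P (mT F)],
      ~~ odd q ->
        vertices F q (P2q F q) 1 = [set T F] /\
        (forall th : F, th != 0 -> normF F q th != 1 ->
           #|vertices F q (P2q F q) th| = (q ^ 2 + q + 1)%N /\
           vertices F q (P2q F q) th = Pi_set F q th)
    & odd q ->
        [/\ vertices F q (P2q F q) (-1) = set0,
            #|vertices F q (P2q F q) 1| = (q ^ 2 + q + 2)%N /\
            vertices F q (P2q F q) 1 = T F |: Pi_set F q (-1)
          & forall th : F, th != 0 -> normF F q th != 1 -> normF F q th != -1 ->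
              #|vertices F q (P2q F q) th| = (q ^ 2 + q + 1)%N /\
              vertices F q (P2q F q) th = Pi_set F q (- th)]].
Proof.
move=> V; rewrite /V V_eq fig_eq; split => //.
- exact: card_V.
- move=> ev; have m1 := even_m1 ev.
  have negE : forall x : F, - x = x by move=> x; rewrite -mulN1r m1 mul1r.
  split.
    rewrite vert_set ?oner_eq0 // N1 eqxx.
    rewrite (_ : [set pt a | a : F & _] = set0) ?setU0 //.
    apply/setP => v; rewrite in_set0; apply/imsetP => -[a]; rewrite inE negE.
    by case/and3P => _ /negPf; rewrite eq_sym => ->.
  move=> th th0; rewrite NE => Nth.
  have -> : vertices F q (P2q F q) th = [set pt a | a : F & (a != 0) && (N a == N th)].
    rewrite vert_set // (negPf Nth) set0U; apply: imset_pt_eq => a; rewrite negE.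
    case: (a =P 0) => //= _; rewrite [N th == _]eq_sym; case: (N a =P N th) => [->|_]; last by rewrite andbF.
    by rewrite andbT.

  by rewrite Pi_eq // card_ptN.
move=> od; have m1 := hodd od.
have nz : forall a : F, (a != 0) && (N a == -1) -> a != 0 by move=> a /andP[].
have E1 : vertices F q (P2q F q) 1 = T F |: Pi_set F q (-1).
  rewrite vert_set ?oner_eq0 // N1 eqxx Pi_eq ?oppr_eq0 ?oner_eq0 // Nm1.
  congr (_ :|: _); apply: imset_pt_eq => a.
  case: (a =P 0) => //= _; rewrite [1 == _]eq_sym eqr_oppLR.
  by case: (N a =P -1) => [->|_]; rewrite ?m1 ?andbF.

split.
- rewrite vert_set ?oppr_eq0 ?oner_eq0 // Nm1 (negPf m1) set0U.
  apply/setP => v; rewrite in_set0; apply/imsetP => -[a]; rewrite inE.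
  case/and3P => _ /negPf; rewrite (inj_eq oppr_inj) eq_sym => ->.
  by [].
- split=> //; rewrite E1 cardsU1 Pi_eq ?oppr_eq0 ?oner_eq0 // Nm1.
  rewrite (T_notin_pt _ nz) -Nm1 card_ptN ?oppr_eq0 ?oner_eq0 //.
  by rewrite add1n -addn1 -addnA.
move=> th th0; rewrite !NE => Nth1 Nthm1.
have -> : vertices F q (P2q F q) th = [set pt a | a : F & (a != 0) && (N a == N (- th))].
  rewrite vert_set // (negPf Nth1) set0U NN; apply: imset_pt_eq => a.
  case: (a =P 0) => //= _; rewrite [N th == _]eq_sym eqr_oppLR.
  case: (N a =P - N th) => [->|]; last by rewrite andbF.
  by rewrite andbT; apply: contra Nthm1 => /eqP h; rewrite -h opprK.
by rewrite Pi_eq ?oppr_eq0 // card_ptN ?oppr_eq0.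
Qed.
End Basics.

Theorem lemma7p3 (F : finFieldType) (q : nat)
  (hq : exists p k : nat, [/\ prime p, (0 < k)%N & q = (p ^ k)%N])
  (hF : #|F| = (q ^ 3)%N) :
  let V := \bigcup_(th : F | th != 0) vertices F q (P2q F q) th in
  [/\ #|V| = (q ^ 3 - q ^ 2 - q - 1)%N,
      V = T F |: [set P in Fig F q (T F) | ~~ incid F P (mT F)],
      ~~ odd q ->
        vertices F q (P2q F q) 1 = [set T F] /\
        (forall th : F, th != 0 -> normF F q th != 1 ->
           #|vertices F q (P2q F q) th| = (q ^ 2 + q + 1)%N /\
           vertices F q (P2q F q) th = Pi_set F q th)
    & odd q ->
        [/\ vertices F q (P2q F q) (-1) = set0,
            #|vertices F q (P2q F q) 1| = (q ^ 2 + q + 2)%N /\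
            vertices F q (P2q F q) 1 = T F |: Pi_set F q (-1)
          & forall th : F, th != 0 -> normF F q th != 1 -> normF F q th != -1 ->
              #|vertices F q (P2q F q) th| = (q ^ 2 + q + 1)%N /\
              vertices F q (P2q F q) th = Pi_set F q (- th)]].
Proof.
move: hq => [p [k [pp k0 qe]]].
have q2 : (1 < q)%N.
  rewrite qe; apply: leq_trans (prime_gt1 pp) _.
  by rewrite -{1}(expn1 p) leq_pexp2l // prime_gt0.
have pc : p \in [pchar F].
  by apply: (@card_finPcharP F p (k * 3)); rewrite // hF qe expnM.
have frobD : forall x y : F, (x + y) ^+ q = x ^+ q + y ^+ q.
  move=> x y; apply: exprDn_pchar; rewrite qe pnatX (pnatE _ pp) pc //.
apply: main_sec => // od; apply/negP => /eqP h.
have po : odd p by move: od; rewrite qe oddX; case: (k) k0 => //= k1 _ ->.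
have := pcharf0 pc; rewrite -(odd_double_half p) po natrD -muln2 natrM.
have -> : (2%:R : F) = 0 by rewrite -[2%N]/(1 + 1)%N natrD -{1}h addNr.
by rewrite mulr0 addr0 => /eqP; rewrite oner_eq0.
Qed.
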